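(* For every $n\ge1$ and $x\in(0,1/2]$, the function $G_n$ satisfies $$\frac{n}{x^{1/n}}\ \ge\ G_n(1/x)\ \ge\ \frac12\cdot\frac{n}{x^{1/n}}\quad\text{when } x\le 2^{-n},$$ $$2\log_2(1/x)\ \ge\ G_n(1/x)\ \ge\ 2+\log\frac{1}{2x}\quad\text{when } x>2^{-n},$$ and $\displaystyle\lim_{x\to0^+}\frac{G_n(1/x)}{n/x^{1/n}}=1$.
   Context: $\log$ is the natural logarithm. The function $G_n$ on $[2,\infty)$: for $n=1$, $G_1(1/x)=1/x$. For $n>1$, $G_n(2)=2$, and for every $\gamma>0$, $$x\,G_n(1/x)=\frac{\gamma n}{(1+\gamma)^n-1}\left[\frac{(1+\gamma)^{n-1}\gamma(n-1)}{(1+\gamma)^{n-1}-1}\right]^{1-1/n}\quad\text{where}\quad x=\frac{(1+\gamma)^{n-1}[\gamma(n-1)-1]+1}{[(1+\gamma)^{n-1}-1][(1+\gamma)^n-1]}\in(0,1/2).$$ *)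

(* Defs.v *)
From Stdlib Require Import Reals Lra ClassicalEpsilon.
From Coquelicot Require Import Coquelicot.
Open Scope R_scope.

(* The parameter x(gamma) in (0,1/2) from the parametric definition of G_n. *)
Definition xpar (n : nat) (g : R) : R :=
  ((1 + g) ^ (n - 1) * (g * INR (n - 1) - 1) + 1) /
  (((1 + g) ^ (n - 1) - 1) * ((1 + g) ^ n - 1)).

(* The value x * G_n(1/x) at x = xpar n g. *)
Definition xGpar (n : nat) (g : R) : R :=
  g * INR n / ((1 + g) ^ n - 1) *
  Rpower ((1 + g) ^ (n - 1) * g * INR (n - 1) / ((1 + g) ^ (n - 1) - 1))
         (1 - 1 / INR n).

(* G_n on [2, +oo): G_1(y) = y; for n > 1, G_n(2) = 2 and, for y = 1/x with
   x = xpar n g (g > 0), G_n(y) = y * xGpar n g.  The parameter g is chosen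
   by Hilbert's epsilon among the g > 0 with xpar n g = 1/y. *)
Definition G (n : nat) (y : R) : R :=
  if Nat.eqb n 1 then y
  else if Req_EM_T y 2 then 2
  else y * xGpar n (epsilon (inhabits 1) (fun g => 0 < g /\ xpar n g = / y)).

(* Main.v *)
Require Import Defs.
From Stdlib Require Import Reals Lra Lia Psatz ClassicalEpsilon.
From Coquelicot Require Import Coquelicot.
Open Scope R_scope.

Fixpoint Sg (k : nat) (a : R) : R :=
  match k with O => 0 | S k' => Sg k' a + a ^ k' end.
Fixpoint Tg (k : nat) (a : R) : R :=
  match k with O => 0 | S k' => Tg k' a + INR (S k') * a ^ k' end.
Fixpoint Vg (k : nat) (a : R) : R :=
  match k with O => 0 | S k' => Vg k' a + Sg k' a end.
Fixpoint hs (c d : R) (k : nat) : R :=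
  match k with O => 0 | S k' => c ^ k' + d * hs c d k' end.

Lemma Sg_S k a : Sg (S k) a = Sg k a + a ^ k. Proof. reflexivity. Qed.
Lemma Tg_S k a : Tg (S k) a = Tg k a + INR (S k) * a ^ k. Proof. reflexivity. Qed.
Lemma Vg_S k a : Vg (S k) a = Vg k a + Sg k a. Proof. reflexivity. Qed.
Lemma Sg_0 a : Sg 0 a = 0. Proof. reflexivity. Qed.
Lemma Tg_0 a : Tg 0 a = 0. Proof. reflexivity. Qed.
Lemma Vg_0 a : Vg 0 a = 0. Proof. reflexivity. Qed.

Lemma Sg_geo k a : (a - 1) * Sg k a = a ^ k - 1.
Proof. induction k; simpl. ring. rewrite Rmult_plus_distr_l, IHk. ring. Qed.

Lemma Tg_geo k a : (a - 1) * Tg k a = INR k * a ^ k - Sg k a.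
Proof. induction k. simpl. ring.
 change (Tg (S k) a) with (Tg k a + INR (S k) * a ^ k).
 change (Sg (S k) a) with (Sg k a + a ^ k).
 rewrite Rmult_plus_distr_l, IHk. rewrite S_INR. simpl. ring. Qed.

Lemma Vg_geo k a : (a - 1) * Vg k a = Sg k a - INR k.
Proof. induction k. simpl; ring.
 change (Vg (S k) a) with (Vg k a + Sg k a).
 change (Sg (S k) a) with (Sg k a + a ^ k).
 rewrite Rmult_plus_distr_l, IHk. rewrite S_INR.
 pose proof (Sg_geo k a). nra. Qed.

Lemma hs_geo c d k : (c - d) * hs c d k = c ^ k - d ^ k.
Proof. induction k; simpl. ring.
 replace ((c - d) * (c ^ k + d * hs c d k)) with ((c-d)*c^k + d * ((c - d) * hs c d k)) by ring.
 rewrite IHk. ring. Qed.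

Lemma pow_ge0 a k : 0 <= a -> 0 <= a ^ k.
Proof. intros; apply pow_le; auto. Qed.

Lemma Sg_ge0 k a : 0 <= a -> 0 <= Sg k a.
Proof. intro; induction k; simpl. lra. pose proof (pow_le a k H). lra. Qed.

Lemma Sg_pos k a : 0 < a -> (1 <= k)%nat -> 0 < Sg k a.
Proof. intros Ha Hk. destruct k. lia. simpl. pose proof (Sg_ge0 k a (Rlt_le _ _ Ha)).
 pose proof (pow_lt a k Ha). lra. Qed.

Lemma Sg_ge1 k a : 0 <= a -> (1 <= k)%nat -> 1 <= Sg k a.
Proof. intros Ha Hk. induction k. lia. simpl. destruct k. simpl. lra.
 pose proof (pow_le a (S k) Ha). assert (1 <= S k)%nat by lia. specialize (IHk H0). lra. Qed.

Lemma Sg_mono k a b : 0 <= a <= b -> Sg k a <= Sg k b.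
Proof. intros H; induction k; simpl. lra.
 assert (a ^ k <= b ^ k) by (apply pow_incr; lra). lra. Qed.

Lemma Vg_mono k a b : 0 <= a <= b -> Vg k a <= Vg k b.
Proof. intros H; induction k; simpl. lra. pose proof (Sg_mono k a b H). lra. Qed.

Lemma Vg_ge0 k a : 0 <= a -> 0 <= Vg k a.
Proof. intro; induction k; simpl. lra. pose proof (Sg_ge0 k a H). lra. Qed.

Lemma Tg_ge0 k a : 0 <= a -> 0 <= Tg k a.
Proof. intro; induction k. rewrite Tg_0; lra. rewrite Tg_S. pose proof (pow_le a k H). pose proof (pos_INR (S k)). nra. Qed.

Lemma Tg_last m a : 0 <= a -> INR (S m) * a ^ m <= Tg (S m) a.
Proof. intro. rewrite Tg_S. pose proof (Tg_ge0 m a H). lra. Qed.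

Lemma Tg_ge_Sg k a : 0 <= a -> Sg k a <= Tg k a.
Proof. intro; induction k. rewrite Tg_0, Sg_0; lra. rewrite Tg_S, Sg_S. pose proof (pow_le a k H). pose proof (pos_INR k).
 rewrite S_INR. nra. Qed.

Lemma aSg_le k a : 1 <= a -> a * Sg k a <= INR k * a ^ k.
Proof. intro Ha; induction k. simpl; lra. rewrite Sg_S, S_INR. simpl pow.
 assert (a^k <= a * a^k) by (pose proof (pow_le a k ltac:(lra)); nra).
 pose proof (pos_INR k). assert (INR k * a^k <= INR k * (a * a^k)) by (apply Rmult_le_compat_l; lra). nra. Qed.

Lemma aTg_le k a : 1 <= a -> a * Tg k a <= INR k * INR k * a ^ k.
Proof. intro Ha; induction k. simpl; lra. rewrite Tg_S, S_INR.
 simpl pow. pose proof (pos_INR k). pose proof (pow_le a k ltac:(lra)).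
 assert (INR k * INR k * a ^ k <= INR k * INR k * (a * a^k)) by (apply Rmult_le_compat_l; nra).
 assert (0 <= INR k * (a * a^k)) by (apply Rmult_le_pos; nra).
 nra. Qed.

Lemma Sg_1 k : Sg k 1 = INR k.
Proof. induction k. simpl; lra. rewrite Sg_S, IHk, pow1, S_INR. ring. Qed.

Lemma Tg_1 k : Tg k 1 = INR k * (INR k + 1) / 2.
Proof. induction k. simpl; lra. rewrite Tg_S, IHk, pow1, S_INR. field. Qed.

Lemma hs_bound c d t b k : 0 <= c -> 0 <= d -> 0 <= t -> 0 <= b -> c <= b * t -> d <= b ->
  b * hs c d k <= b ^ k * Sg k t.
Proof. intros Hc Hd Ht Hb H1 H2. induction k; simpl. lra.
 assert (c ^ k <= (b*t)^k) by (apply pow_incr; lra). rewrite Rpow_mult_distr in H.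
 assert (0 <= hs c d k). { clear IHk H. induction k; simpl. lra. pose proof (pow_le c k Hc). nra. }
 pose proof (pow_le b k Hb). pose proof (pow_le t k Ht). pose proof (Sg_ge0 k t Ht).
 assert (b * c^k <= b * (b^k * t^k)) by (apply Rmult_le_compat_l; lra).
 assert (d * (b * hs c d k) <= b * (b ^ k * Sg k t)).
 { apply Rmult_le_compat; nra. }
 nra. Qed.

Lemma Sg_le_pow k d : 1 <= d -> Sg k d <= INR k * d ^ k.
Proof. intro. pose proof (aSg_le k d H). pose proof (Sg_ge0 k d ltac:(lra)). nra. Qed.

Lemma pair_ineq k d : 1 <= d -> 2 * Sg (S k) d <= INR (S k) * (1 + d ^ k).
Proof. intro Hd. induction k. simpl. lra.
 replace (Sg (S (S k)) d) with (Sg (S k) d + d ^ (S k)) by reflexivity.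
 rewrite !S_INR in *.
 assert ((d - 1) * Sg k d <= (d-1) * (INR k * d ^ k)).
 { apply Rmult_le_compat_l. lra. apply Sg_le_pow; lra. }
 rewrite Sg_geo in H. simpl pow in *.
 assert (key: (INR k + 1) * d^k <= 1 + INR k * (d * d^k)) by (ring_simplify in H; ring_simplify; lra).
 ring_simplify. ring_simplify in IHk. lra. Qed.

Lemma pow_lt_strict a b n : 0 <= a < b -> (1 <= n)%nat -> a ^ n < b ^ n.
Proof. intros H Hn. induction n. lia. destruct n. simpl; lra.
 simpl. simpl in IHn. assert (IH: a * a ^ n < b * b ^ n) by (apply IHn; lia).
 pose proof (pow_le a n ltac:(lra)). apply Rmult_le_0_lt_compat; nra. Qed.

Lemma pow_le_inv a b n : 0 <= a -> 0 <= b -> (1 <= n)%nat -> a ^ n <= b ^ n -> a <= b.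
Proof. intros Ha Hb Hn H. destruct (Rle_lt_dec a b). auto.
 pose proof (pow_lt_strict b a n ltac:(lra) Hn). lra. Qed.

Definition rt (n : nat) (y : R) : R := Rpower y (1 / INR n).

Lemma rt_pos n y : 0 < rt n y.
Proof. unfold rt, Rpower. apply exp_pos. Qed.

Lemma rt_pow n y : (1 <= n)%nat -> 0 < y -> rt n y ^ n = y.
Proof. intros Hn Hy. unfold rt. rewrite <- Rpower_pow by (apply exp_pos).
 rewrite Rpower_mult. replace (1 / INR n * INR n) with 1. apply Rpower_1; auto.
 field. apply not_0_INR; lia. Qed.

Lemma rt_le_of_pow n y z : (1 <= n)%nat -> 0 < y -> 0 <= z -> y <= z ^ n -> rt n y <= z.
Proof. intros. apply (pow_le_inv _ _ n); auto. left; apply rt_pos. rewrite rt_pow; auto. Qed.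

Lemma rt_ge_of_pow n y z : (1 <= n)%nat -> 0 < y -> 0 <= z -> z ^ n <= y -> z <= rt n y.
Proof. intros. apply (pow_le_inv _ _ n); auto. left; apply rt_pos. rewrite rt_pow; auto. Qed.

Lemma rt_mono n y z : (1 <= n)%nat -> 0 < y -> y <= z -> rt n y <= rt n z.
Proof. intros. apply rt_le_of_pow; auto. left; apply rt_pos. rewrite rt_pow by (auto; lra). lra. Qed.

Lemma rt_mult n y z : 0 < y -> 0 < z -> rt n (y * z) = rt n y * rt n z.
Proof. intros; unfold rt. rewrite Rpower_mult_distr; auto. Qed.

Lemma rt_exp n y : 0 < y -> rt n y = exp (ln y / INR n).
Proof. intros; unfold rt, Rpower. f_equal. unfold Rdiv. ring. Qed.

Lemma ln_le_sub1 y : 0 < y -> ln y <= y - 1.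
Proof. intros. pose proof (exp_ineq1_le (ln y)). rewrite exp_ln in H0; lra. Qed.

Lemma exp_conv l A B : 0 <= l <= 1 -> exp ((1 - l) * A + l * B) <= (1 - l) * exp A + l * exp B.
Proof. intros Hl. set (C := (1 - l) * A + l * B).
 assert (exp A >= exp C * (1 + (A - C))).
 { replace (exp A) with (exp C * exp (A - C)) by (rewrite <- exp_plus; f_equal; ring).
   pose proof (exp_ineq1_le (A - C)). pose proof (exp_pos C). nra. }
 assert (exp B >= exp C * (1 + (B - C))).
 { replace (exp B) with (exp C * exp (B - C)) by (rewrite <- exp_plus; f_equal; ring).
   pose proof (exp_ineq1_le (B - C)). pose proof (exp_pos C). nra. }
 assert ((1-l) * exp A + l * exp B >= (1-l) * (exp C * (1 + (A - C))) + l * (exp C * (1 + (B - C)))) by nra.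
 assert ((1-l) * (exp C * (1 + (A - C))) + l * (exp C * (1 + (B - C))) = exp C) by (unfold C; ring).
 lra. Qed.

Lemma Rpower_concave z p : 0 < z -> 0 <= p <= 1 -> Rpower z p <= 1 + p * (z - 1).
Proof. intros Hz Hp. unfold Rpower.
 replace (p * ln z) with ((1 - p) * 0 + p * ln z) by ring.
 eapply Rle_trans. apply exp_conv; auto. rewrite exp_0, exp_ln; auto. lra. Qed.

Lemma Bernoulli_nat (h : R) (n : nat) : 0 <= h -> 1 + INR n * h <= (1 + h) ^ n.
Proof. intros Hh. induction n. simpl; lra. rewrite S_INR. simpl.
 pose proof (pos_INR n). nra. Qed.

Lemma Rpower_p_pow m u : 0 < u -> Rpower u (1 - 1 / INR (S m)) ^ (S m) = u ^ m.
Proof. intros Hu. rewrite <- Rpower_pow by (apply exp_pos). rewrite Rpower_mult.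
 rewrite <- Rpower_pow by auto. f_equal. rewrite S_INR. field. pose proof (pos_INR m); lra. Qed.

Lemma Rpower_p_rt m u : 0 < u -> Rpower u (1 - 1 / INR (S m)) = u / rt (S m) u.
Proof. intros Hu. unfold rt. unfold Rminus. rewrite Rpower_plus, Rpower_Ropp, Rpower_1; auto. Qed.

Lemma rt_pow_m m y : 0 < y -> rt (S m) y ^ m = Rpower y (1 - 1 / INR (S m)).
Proof. intros Hy. unfold rt. rewrite <- Rpower_pow by (apply exp_pos). rewrite Rpower_mult.
 f_equal. rewrite S_INR. field. pose proof (pos_INR m); lra. Qed.

Lemma lower_log (m : nat) (c r s : R) : (1 <= m)%nat -> 1 < c -> 0 < r -> 2 < s ->
  c ^ (S m) = 1 + r * s ->
  2 + ln (s / 2) <= INR (S m) * (c - 1) * Rpower (1 + r) (1 - 1 / INR (S m)) / r.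
Proof.
 intros Hm Hc Hr Hs Hcn.
 set (n := S m). set (p := 1 - 1 / INR n).
 assert (Hn : (1 <= n)%nat) by (unfold n; lia).
 assert (HnR : 0 < INR n) by (apply lt_0_INR; lia).
 assert (Hp : 0 <= p <= 1).
 { unfold p. split. assert (1 <= INR n) by (apply (le_INR 1); lia).
   assert (1 / INR n <= 1) by (apply Rmult_le_reg_r with (INR n); auto; field_simplify; lra). lra.
   assert (0 < 1 / INR n) by (apply Rdiv_lt_0_compat; lra). lra. }
 set (B := 1 + r). set (Bp := Rpower B p).
 assert (HBp : 0 < Bp) by (apply exp_pos).
 set (d := rt n (1 + 2 * r)). set (t := rt n (s / 2)).
 assert (Hd : d ^ n = 1 + 2 * r) by (apply rt_pow; auto; lra).
 assert (Ht : t ^ n = s / 2) by (apply rt_pow; auto; lra).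
 assert (Hd1 : 1 < d).
 { destruct (Rle_lt_dec d 1); auto. assert (d ^ n <= 1 ^ n) by (apply pow_incr; pose proof (rt_pos n (1+2*r)); fold d in H; lra).
   rewrite pow1 in H. lra. }
 assert (Ht1 : 1 < t).
 { destruct (Rle_lt_dec t 1); auto. assert (t ^ n <= 1 ^ n) by (apply pow_incr; pose proof (rt_pos n (s/2)); fold t in H; lra).
   rewrite pow1 in H. lra. }
 assert (CA : 2 * r <= INR n * Bp * (d - 1)).
 { pose proof (Sg_geo n d) as G1. rewrite Hd in G1.
   pose proof (pair_ineq m d ltac:(lra)) as PI. fold n in PI.
   assert (Hdm : d ^ m = Rpower (1 + 2 * r) p) by (apply rt_pow_m; lra).
   assert (Mid : 1 + Rpower (1 + 2 * r) p <= 2 * Bp).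
   { assert (E1 : Rpower (1 + 2 * r) p = Bp * Rpower ((1 + 2*r)/B) p).
     { unfold Bp. rewrite Rpower_mult_distr by (unfold B; try apply Rdiv_lt_0_compat; lra).
       f_equal. unfold B; field. lra. }
     assert (E2 : 1 = Bp * Rpower (1 / B) p).
     { unfold Bp. rewrite Rpower_mult_distr by (unfold B; try apply Rdiv_lt_0_compat; lra).
       replace (B * (1 / B)) with 1 by (unfold B; field; lra). unfold Rpower. rewrite ln_1.
       rewrite Rmult_0_r, exp_0. auto. }
     pose proof (Rpower_concave ((1+2*r)/B) p ltac:(unfold B; apply Rdiv_lt_0_compat; lra) Hp).
     pose proof (Rpower_concave (1/B) p ltac:(unfold B; apply Rdiv_lt_0_compat; lra) Hp).
     assert (((1 + 2 * r) / B - 1) + (1 / B - 1) = 0) by (unfold B; field; lra).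
     rewrite E1. rewrite E2 at 1.
     assert (Rpower (1 / B) p + Rpower ((1 + 2 * r) / B) p <= 2) by nra.
     nra. }
   rewrite Hdm in PI.
   assert (2 * Sg n d <= INR n * (2 * Bp)) by (eapply Rle_trans; [apply PI|]; apply Rmult_le_compat_l; lra).
   assert (Sg n d <= INR n * Bp) by lra.
   assert ((d - 1) * Sg n d <= (d - 1) * (INR n * Bp)) by (apply Rmult_le_compat_l; lra).
   lra. }
 set (beta := rt n (2 * B)).
 assert (Hbeta : beta ^ n = 2 * B) by (apply rt_pow; auto; unfold B; lra).
 assert (Hbpos : 0 < beta) by apply rt_pos.
 assert (Hcb : c <= beta * t).
 { apply (pow_le_inv _ _ n); try lra; auto. pose proof (rt_pos n (s/2)); fold t in H; nra.
   rewrite Rpow_mult_distr, Hbeta, Ht. fold n in Hcn. rewrite Hcn. unfold B. nra. }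
 assert (Hdb : d <= beta).
 { apply (pow_le_inv _ _ n); try lra; auto. rewrite Hbeta, Hd. unfold B; lra. }
 pose proof (hs_bound c d t beta n ltac:(lra) ltac:(lra) ltac:(lra) ltac:(lra) Hcb Hdb) as HB.
 assert (Hbm : beta ^ m = Rpower 2 p * Bp).
 { replace (beta ^ m) with (Rpower (2*B) p) by (symmetry; apply rt_pow_m; unfold B; lra).
   unfold Bp. rewrite Rpower_mult_distr; auto; unfold B; lra. }
 assert (H2p : Rpower 2 p <= 2).
 { replace 2 with (Rpower 2 1) at 2 by (apply Rpower_1; lra). apply Rle_Rpower; lra. }
 assert (Hhs : hs c d n <= 2 * Bp * Sg n t).
 { replace (beta ^ n) with (beta * beta ^ m) in HB by reflexivity.
   rewrite Hbm in HB. pose proof (Sg_ge0 n t ltac:(lra)).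
   assert (hs c d n <= Rpower 2 p * Bp * Sg n t).
   { apply Rmult_le_reg_l with beta; auto. lra. }
   assert (Rpower 2 p * Bp * Sg n t <= 2 * Bp * Sg n t) by (apply Rmult_le_compat_r; auto; nra). lra. }
 pose proof (hs_geo c d n) as HG. rewrite Hd in HG. fold n in Hcn. rewrite Hcn in HG.
 pose proof (Sg_geo n t) as TG. rewrite Ht in TG.
 assert (Hcd : d < c).
 { destruct (Rle_lt_dec c d); auto. assert (c ^ n <= d ^ n) by (apply pow_incr; lra). rewrite Hd, Hcn in H. nra. }
 assert (Hspos : 0 < Sg n t) by (apply Sg_pos; lia || lra).
 assert (CB : r * (t - 1) <= (c - d) * Bp).
 { assert (r * (s - 2) <= (c - d) * (2 * Bp * Sg n t)) by (rewrite <- Rmult_assoc; rewrite <- (Rmult_comm (2*Bp)); 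
      pose proof (Rmult_le_compat_l (c - d) _ _ ltac:(lra) Hhs); nra).
   assert (s - 2 = 2 * ((t - 1) * Sg n t)) by (rewrite TG; field).
   rewrite H0 in H.
   apply Rmult_le_reg_r with (2 * Sg n t). lra. nra. }
 assert (Hlt : ln (s / 2) <= INR n * (t - 1)).
 { unfold t. rewrite rt_exp by lra. pose proof (ln_le_sub1 (exp (ln (s / 2) / INR n)) (exp_pos _)).
   rewrite ln_exp in H. apply Rmult_le_compat_l with (r := INR n) in H; [|lra].
   replace (INR n * (ln (s / 2) / INR n)) with (ln (s/2)) in H by (field; lra). lra. }
 assert (2 * r + INR n * (r * (t - 1)) <= INR n * (c - 1) * Bp).
 { assert (INR n * (r * (t - 1)) <= INR n * ((c - d) * Bp)) by (apply Rmult_le_compat_l; lra). nra. }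
 apply Rmult_le_reg_r with r; auto. unfold Rdiv. rewrite Rmult_assoc, Rinv_l, Rmult_1_r by lra.
 fold B Bp. nra.
Qed.

Definition X (m : nat) (a : R) : R := Tg m a / (Sg m a * Sg (S m) a).

Lemma Sg_closed k a : a <> 1 -> Sg k a = (a ^ k - 1) / (a - 1).
Proof. intros. rewrite <- (Sg_geo k a). field. lra. Qed.
Lemma Tg_closed k a : a <> 1 -> Tg k a = (INR k * a ^ k - (a ^ k - 1) / (a - 1)) / (a - 1).
Proof. intros. rewrite <- (Sg_closed k a H). rewrite <- (Tg_geo k a). field. lra. Qed.
Lemma Vg_closed k a : a <> 1 -> Vg k a = ((a ^ k - 1) / (a - 1) - INR k) / (a - 1).
Proof. intros. rewrite <- (Sg_closed k a H). rewrite <- (Vg_geo k a). field. lra. Qed.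

Lemma SS_ident m a : a <> 1 -> Sg m a * Sg (S m) a = Tg m a + a ^ m * Vg (S m) a.
Proof. intros H. rewrite !Sg_closed, Tg_closed, Vg_closed by auto. rewrite S_INR. simpl pow.
 field. lra. Qed.

Lemma xpar_X m g : (1 <= m)%nat -> 0 < g -> xpar (S m) g = X m (1 + g).
Proof. intros Hm Hg. unfold xpar, X. replace (S m - 1)%nat with m by lia.
 assert (H1 : 1 + g <> 1) by lra.
 rewrite !Sg_closed, Tg_closed by auto. simpl pow.
 replace (1 + g - 1) with g by ring.
 assert (0 < (1+g)^m - 1).
 { assert (1 < (1+g)^m). { pose proof (Bernoulli_nat g m ltac:(lra)). pose proof (lt_0_INR m ltac:(lia)). nra. } lra. }
 assert (0 < (1+g) * (1+g)^m - 1).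
 { assert (0 < g * (1+g)^m) by (apply Rmult_lt_0_compat; lra). lra. }
 field. repeat split; lra. Qed.

Definition tau k a := Tg k a / a ^ k.

Lemma tau_S k a : 0 < a -> tau (S k) a = (tau k a + INR (S k)) / a.
Proof. intros. unfold tau. rewrite Tg_S. simpl pow. assert (a ^ k <> 0) by (apply pow_nonzero; lra). field. split; lra. Qed.

Lemma tau_ge0 k a : 0 < a -> 0 <= tau k a.
Proof. intros. unfold tau. apply Rdiv_le_0_compat. apply Tg_ge0; lra. apply pow_lt; lra. Qed.

Lemma tau_mono k a b : 0 < a <= b -> tau k b <= tau k a.
Proof. intros H. induction k. unfold tau; simpl; lra.
 rewrite !tau_S by lra. pose proof (tau_ge0 k b ltac:(lra)). pose proof (pos_INR (S k)).
 apply Rle_trans with ((tau k a + INR (S k)) / b).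
 apply Rmult_le_compat_r. left; apply Rinv_0_lt_compat; lra. lra.
 apply Rmult_le_compat_l. pose proof (tau_ge0 k a ltac:(lra)); lra.
 apply Rinv_le_contravar; lra. Qed.

Lemma X_tau m a : 1 < a -> (1 <= m)%nat -> X m a = tau m a / (tau m a + Vg (S m) a).
Proof. intros Ha Hm. unfold X. rewrite SS_ident by lra. unfold tau.
 assert (0 < a ^ m) by (apply pow_lt; lra).
 assert (0 < Tg m a) by (pose proof (Tg_ge_Sg m a ltac:(lra)); pose proof (Sg_pos m a ltac:(lra) Hm); lra).
 pose proof (Vg_ge0 (S m) a ltac:(lra)).
 field. split. lra. nra. Qed.

Lemma tau_pos m a : 0 < a -> (1 <= m)%nat -> 0 < tau m a.
Proof. intros. unfold tau. apply Rdiv_lt_0_compat. pose proof (Tg_ge_Sg m a ltac:(lra)); pose proof (Sg_pos m a H H0); lra.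
 apply pow_lt; lra. Qed.

Lemma X_mono m a b : (1 <= m)%nat -> 1 < a <= b -> X m b <= X m a.
Proof. intros Hm H. rewrite !X_tau by (auto; lra).
 pose proof (tau_mono m a b ltac:(lra)). pose proof (tau_pos m a ltac:(lra) Hm). pose proof (tau_pos m b ltac:(lra) Hm).
 pose proof (Vg_mono (S m) a b ltac:(lra)). pose proof (Vg_ge0 (S m) a ltac:(lra)).
 apply Rmult_le_reg_r with ((tau m a + Vg (S m) a) * (tau m b + Vg (S m) b)). nra.
 field_simplify; try lra. nra. Qed.

Lemma X_1 m : (1 <= m)%nat -> X m 1 = 1 / 2.
Proof. intros. unfold X. rewrite Tg_1, !Sg_1, S_INR. assert (0 < INR m) by (apply lt_0_INR; lia). field. lra. Qed.

Lemma X_bound m a : (1 <= m)%nat -> 1 <= a -> X m a <= INR m * INR m / a.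
Proof. intros Hm Ha. unfold X. pose proof (aTg_le m a Ha).
 pose proof (Sg_ge1 m a ltac:(lra) Hm). assert (a ^ m <= Sg (S m) a) by (rewrite Sg_S; pose proof (Sg_ge0 m a ltac:(lra)); lra).
 pose proof (pow_lt a m ltac:(lra)). pose proof (Tg_ge0 m a ltac:(lra)).
 assert (HD : 0 < Sg m a * Sg (S m) a) by (apply Rmult_lt_0_compat; lra).
 apply (Rmult_le_reg_r (a * (Sg m a * Sg (S m) a))). apply Rmult_lt_0_compat; lra.
 replace (Tg m a / (Sg m a * Sg (S m) a) * (a * (Sg m a * Sg (S m) a))) with (a * Tg m a) by (field; lra).
 replace (INR m * INR m / a * (a * (Sg m a * Sg (S m) a))) with (INR m * INR m * (Sg m a * Sg (S m) a)) by (field; lra).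
 assert (INR m * INR m * a^m <= INR m * INR m * (Sg m a * Sg (S m) a)).
 { apply Rmult_le_compat_l. pose proof (pos_INR m); nra. nra. }
 lra. Qed.

Lemma cont_pow k : continuity (fun a => a ^ k).
Proof. induction k. apply continuity_const. intros x y; auto.
 change (continuity (fun a => a * a ^ k)). apply (continuity_mult (fun a => a) (fun a => a^k)); auto.
 apply derivable_continuous, derivable_id. Qed.

Lemma cont_Sg k : continuity (Sg k).
Proof. induction k. apply continuity_const. intros x y; auto.
 change (continuity (fun a => Sg k a + a ^ k)). apply (continuity_plus (Sg k) (fun a => a^k)); auto. apply cont_pow. Qed.

Lemma cont_Tg k : continuity (Tg k).
Proof. induction k. apply continuity_const. intros x y; auto.
 change (continuity (fun a => Tg k a + INR (S k) * a ^ k)). apply (continuity_plus (Tg k) (fun a => INR (S k) * a^k)); auto.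
 apply (continuity_mult (fun _ => INR (S k)) (fun a => a^k)). apply continuity_const; intros x y; auto. apply cont_pow. Qed.

Lemma X_cont m a : (1 <= m)%nat -> 0 < a -> continuity_pt (X m) a.
Proof. intros Hm Ha. unfold X.
 apply (continuity_pt_div (Tg m) (fun a => Sg m a * Sg (S m) a)). apply cont_Tg.
 apply (continuity_pt_mult (Sg m) (Sg (S m))); apply cont_Sg.
 pose proof (Sg_pos m a Ha Hm). pose proof (Sg_pos (S m) a Ha ltac:(lia)). nra. Qed.

Lemma X_exists m x : (1 <= m)%nat -> 0 < x < 1 / 2 -> exists g, 0 < g /\ X m (1 + g) = x.
Proof. intros Hm Hx. set (A := INR m * INR m / x + 1).
 assert (Hm0 : 0 < INR m) by (apply lt_0_INR; lia).
 assert (Hq : 0 < INR m * INR m / x) by (apply Rdiv_lt_0_compat; nra).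
 assert (HA : 1 < A) by (unfold A; lra).
 assert (XA : X m A < x).
 { eapply Rle_lt_trans. apply X_bound; auto; lra.
   apply (Rmult_lt_reg_r A). lra.
   replace (INR m * INR m / A * A) with (INR m * INR m) by (field; lra).
   unfold A. replace (x * (INR m * INR m / x + 1)) with (INR m * INR m + x) by (field; lra). lra. }
 destruct (Ranalysis5.IVT_interv (fun a => x - X m a) 1 A) as [z [Hz1 Hz2]].
 - intros a Ha. apply continuity_pt_minus. apply continuity_pt_const; intros u v; auto. apply X_cont; auto; lra.
 - auto.
 - rewrite X_1 by auto. lra.
 - lra.
 - exists (z - 1). replace (1 + (z - 1)) with z by ring. split; [|lra].
   destruct Hz1 as [H1 _]. destruct H1; [lra|]. subst z. rewrite X_1 in Hz2 by auto. lra.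
Qed.

Section Min.
Variable m : nat.
Hypothesis Hm : (1 <= m)%nat.
Variable x : R.
Hypothesis Hx : 0 < x < 1/2.

Let n := S m.
Let p := 1 - 1 / INR n.

Definition qf (c : R) := (1 + c) ^ n - 1.

Lemma qf_pos c : 0 < c -> 0 < qf c.
Proof. intros. unfold qf. pose proof (Bernoulli_nat c n ltac:(lra)).
 assert (0 < INR n) by (apply lt_0_INR; unfold n; lia). nra. Qed.

Definition Fm (c : R) := ln c - ln ((1 + c) ^ n - 1) + p * ln (1 + x * ((1 + c) ^ n - 1)).
Definition dFm (c : R) := / c - INR n * (1 + c) ^ m / ((1 + c) ^ n - 1)
   + p * (x * (INR n * (1 + c) ^ m)) / (1 + x * ((1 + c) ^ n - 1)).

Lemma Fm_derive c : 0 < c -> is_derive Fm c (dFm c).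
Proof. intros Hc. pose proof (qf_pos c Hc) as Hq. unfold qf in Hq. unfold Fm, dFm.
 change ((1+c)^n) with ((1+c)*(1+c)^m) in Hq.
 assert (0 < x * ((1 + c) * (1 + c) ^ m + - (1))) by (apply Rmult_lt_0_compat; lra).
 auto_derive.
 - repeat split; lra.
 - change (match m with 0%nat => 1 | S _ => INR m + 1 end) with (INR (S m)).
   unfold n. change ((1+c)^(S m)) with ((1+c)*(1+c)^m).
   field. repeat split; lra.
Qed.

Lemma pm1_pos c : 0 < c -> 0 < (1 + c) ^ m - 1.
Proof. intros. pose proof (Bernoulli_nat c m ltac:(lra)).
 assert (0 < INR m) by (apply lt_0_INR; lia). nra. Qed.

Lemma dFm_ident c : 0 < c ->
  dFm c * (c * qf c * (1 + x * qf c)) = qf c * ((1 + c) ^ m - 1) * (x - X m (1 + c)).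
Proof. intros Hc. pose proof (qf_pos c Hc) as Hq. pose proof (pm1_pos c Hc) as Hp1.
 assert (0 < x * qf c) by (apply Rmult_lt_0_compat; lra).
 rewrite <- xpar_X by auto. unfold xpar, dFm, qf in *. replace (S m - 1)%nat with m by lia.
 unfold p, n in *. rewrite S_INR in *. change ((1+c)^(S m)) with ((1+c)*(1+c)^m) in *.
 assert (0 < INR m) by (apply lt_0_INR; lia).
 field. repeat split; lra. Qed.

Lemma Fm_cont c : 0 < c -> continuity_pt Fm c.
Proof. intros. apply derivable_continuous_pt. exists (dFm c). apply is_derive_Reals. apply Fm_derive; auto. Qed.

Lemma Fm_min g c : 0 < g -> X m (1 + g) = x -> 0 < c -> Fm g <= Fm c.
Proof. intros Hg HX Hc.
 destruct (MVT_gen Fm g c dFm) as [z [Hz Heq]].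
 - intros y Hy. apply Fm_derive. destruct Hy. unfold Rmin in H; destruct (Rle_dec g c); lra.
 - intros y Hy. apply Fm_cont. destruct Hy. unfold Rmin in H; destruct (Rle_dec g c); lra.
 - assert (Hzpos : 0 < z) by (destruct Hz; unfold Rmin in H; destruct (Rle_dec g c); lra).
   pose proof (dFm_ident z Hzpos) as DI.
   pose proof (qf_pos z Hzpos). pose proof (pm1_pos z Hzpos).
   assert (Hden : 0 < z * qf z * (1 + x * qf z)).
   { assert (0 < x * qf z) by (apply Rmult_lt_0_compat; lra). apply Rmult_lt_0_compat; [apply Rmult_lt_0_compat|]; lra. }
   assert (Hk : 0 < qf z * ((1 + z) ^ m - 1)) by (apply Rmult_lt_0_compat; lra).
   destruct (Rle_lt_dec g c).
   + assert (g <= z) by (destruct Hz; unfold Rmin in H1; destruct (Rle_dec g c); lra).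
     assert (X m (1 + z) <= X m (1 + g)) by (apply X_mono; auto; lra).
     assert (0 <= dFm z).
     { apply Rmult_le_reg_r with (z * qf z * (1 + x * qf z)); auto. rewrite DI. rewrite Rmult_0_l.
       apply Rmult_le_pos; lra. }
     assert (0 <= dFm z * (c - g)) by (apply Rmult_le_pos; lra). lra.
   + assert (z <= g) by (destruct Hz; unfold Rmax in H2; destruct (Rle_dec g c); lra).
     assert (X m (1 + g) <= X m (1 + z)) by (apply X_mono; auto; lra).
     assert (dFm z <= 0).
     { apply Rmult_le_reg_r with (z * qf z * (1 + x * qf z)); auto. rewrite DI. rewrite Rmult_0_l.
       assert (x - X m (1 + z) <= 0) by lra. 
       pose proof (Rmult_le_compat_l _ _ _ (Rlt_le _ _ Hk) H3). lra. }
     assert (0 <= dFm z * (c - g)) by (replace (dFm z * (c - g)) with ((- dFm z) * (g - c)) by ring; apply Rmult_le_pos; lra).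
     lra.
Qed.

Definition Hm_ (c : R) := INR n * c / qf c * Rpower (1 + x * qf c) p.

Lemma Hm_exp c : 0 < c -> Hm_ c = INR n * exp (Fm c).
Proof. intros Hc. pose proof (qf_pos c Hc). unfold Hm_, Fm, qf in *.
 
 set (q := (1 + c) ^ n - 1) in *. set (y := 1 + x * q).
 replace (ln c - ln q + p * ln y) with (ln c + (- ln q) + p * ln y) by ring.
 rewrite !exp_plus, exp_Ropp, !exp_ln by lra.
 unfold Rpower. field. lra. Qed.

Lemma Hm_min g c : 0 < g -> X m (1 + g) = x -> 0 < c -> Hm_ g <= Hm_ c.
Proof. intros. rewrite !Hm_exp by auto. apply Rmult_le_compat_l. apply pos_INR.
 destruct (Fm_min g c H H0 H1). left; apply exp_increasing; auto. rewrite H2; lra. Qed.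
End Min.

Lemma ln2_pos : 0 < ln 2.
Proof. pose proof ln_lt_2. lra. Qed.

Lemma ln4 : ln 4 = 2 * ln 2.
Proof. replace 4 with (2 * 2) by ring. rewrite ln_mult; lra. Qed.

Lemma num_small s : 2 <= s <= 4 -> s <= 2 * (ln s / ln 2).
Proof. intros Hs. pose proof ln2_pos as L.
 assert (H1 : ln 2 <= ln s) by (apply ln_le; lra).
 assert (H2 : ln s <= 2 * ln 2) by (rewrite <- ln4; apply ln_le; lra).
 set (y := ln s / ln 2). assert (Hy : ln s = y * ln 2) by (unfold y; field; lra).
 assert (Hy1 : 1 <= y <= 2) by nra.
 set (th := y - 1).
 assert (E : s / 2 = exp ((1 - th) * 0 + th * ln 2)).
 { replace ((1 - th) * 0 + th * ln 2) with (ln s - ln 2) by (unfold th; rewrite Hy; ring).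
   unfold Rminus. rewrite exp_plus, exp_Ropp, !exp_ln by lra. field. }
 pose proof (exp_conv th 0 (ln 2) ltac:(unfold th; lra)) as C.
 rewrite <- E, exp_0, exp_ln in C by lra. unfold th in C. lra. Qed.

Lemma Sg_tangent K y c : 0 < y ->
  exp c * (INR K + ln y * (INR K * (INR K - 1) / 2) - INR K * c) <= Sg K y.
Proof. intros Hy. induction K.
 - simpl. lra.
 - rewrite Sg_S, S_INR.
   assert (T : exp c * (1 + (INR K * ln y - c)) <= y ^ K).
   { replace (y ^ K) with (exp c * exp (INR K * ln y - c)).
     pose proof (exp_ineq1_le (INR K * ln y - c)). pose proof (exp_pos c). nra.
     rewrite <- exp_plus. replace (c + (INR K * ln y - c)) with (INR K * ln y) by ring.
     rewrite <- ln_pow by lra. apply exp_ln. apply pow_lt; lra. }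
   replace (exp c * (INR K + 1 + ln y * ((INR K + 1) * (INR K + 1 - 1) / 2) - (INR K + 1) * c))
     with (exp c * (INR K + ln y * (INR K * (INR K - 1) / 2) - INR K * c) + exp c * (1 + (INR K * ln y - c))) by field.
   lra.
Qed.

Lemma Sg_amgm m y : 0 < y -> INR (S m) * exp (INR m / 2 * ln y) <= Sg (S m) y.
Proof. intros Hy. pose proof (Sg_tangent (S m) y (INR m / 2 * ln y) Hy).
 rewrite S_INR in *. replace ((INR m + 1) * exp (INR m / 2 * ln y)) with
  (exp (INR m / 2 * ln y) * (INR m + 1 + ln y * ((INR m + 1) * (INR m + 1 - 1) / 2) - (INR m + 1) * (INR m / 2 * ln y))) by field.
 auto. Qed.

Section Num.
Variable m : nat.
Hypothesis Hm : (1 <= m)%nat.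
Let n := S m.
Let p := 1 - 1 / INR n.

Lemma HnR : 0 < INR n.
Proof. apply lt_0_INR; unfold n; lia. Qed.

Lemma R2p : Rpower 2 p = exp (INR m / INR n * ln 2).
Proof. unfold Rpower, p, n. f_equal. rewrite S_INR. field. pose proof (pos_INR m); lra. Qed.

Lemma E2_bound : INR n * Rpower 2 p * (rt n 5 - 1) <= 4.
Proof. set (y := rt n 5).
 assert (Hy : y ^ n = 5) by (apply rt_pow; unfold n; lia || lra).
 assert (Hyp : 0 < y) by apply rt_pos.
 pose proof (Sg_geo n y) as G. rewrite Hy in G.
 pose proof (Sg_amgm m y Hyp) as A. fold n in A.
 assert (Hly : ln y = ln 5 / INR n) by (unfold y; rewrite rt_exp by lra; rewrite ln_exp; auto).
 assert (Hle : Rpower 2 p <= exp (INR m / 2 * ln y)).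
 { rewrite R2p. left. apply exp_increasing. rewrite Hly.
   assert (2 * ln 2 < ln 5) by (rewrite <- ln4; apply ln_increasing; lra).
   pose proof HnR. pose proof (lt_0_INR m ltac:(lia)).
   replace (INR m / 2 * (ln 5 / INR n)) with (INR m / INR n * (ln 5 / 2)) by (field; lra).
   apply Rmult_lt_compat_l. apply Rdiv_lt_0_compat; lra. lra. }
 assert (Hy1 : 1 < y).
 { destruct (Rle_lt_dec y 1); auto. assert (y ^ n <= 1 ^ n) by (apply pow_incr; lra). rewrite pow1 in H. lra. }
 assert (INR n * Rpower 2 p <= Sg n y).
 { eapply Rle_trans; [|apply A]. apply Rmult_le_compat_l. left; apply HnR. auto. }
 assert ((y - 1) * (INR n * Rpower 2 p) <= (y - 1) * Sg n y) by (apply Rmult_le_compat_l; lra).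
 lra. Qed.

Lemma En_bound : Rpower 2 p * (2 * rt n (5/4) - 1) <= 2.
Proof. pose proof HnR as Hn.
 assert (A : rt n (5/4) <= 1 + 1 / (4 * INR n)).
 { apply rt_le_of_pow. unfold n; lia. lra. assert (0 < 1 / (4 * INR n)) by (apply Rdiv_lt_0_compat; lra). lra.
   pose proof (Bernoulli_nat (1 / (4 * INR n)) n ltac:(left; apply Rdiv_lt_0_compat; lra)).
   replace (1 + INR n * (1 / (4 * INR n))) with (5/4) in H by (field; lra). auto. }
 assert (B : 1 + ln 2 / INR n <= rt n 2).
 { rewrite rt_exp by lra. apply exp_ineq1_le. }
 assert (C : 1 / (2 * INR n) <= ln 2 / INR n).
 { pose proof ln_lt_2. replace (1 / (2 * INR n)) with ((1/2) / INR n) by (field; lra).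
   unfold Rdiv at 1 3. apply Rmult_le_compat_r. left; apply Rinv_0_lt_compat; lra. lra. }
 assert (D : 2 * rt n (5/4) - 1 <= rt n 2).
 { replace (1 / (4 * INR n)) with (1 / (2 * INR n) / 2) in A by (field; lra). lra. }
 replace (Rpower 2 p) with (2 / rt n 2) by (symmetry; unfold p, n; apply Rpower_p_rt; lra). pose proof (rt_pos n 2).
 apply (Rmult_le_reg_r (rt n 2)); auto.
 replace (2 / rt n 2 * (2 * rt n (5 / 4) - 1) * rt n 2) with (2 * (2 * rt n (5 / 4) - 1)) by (field; lra).
 lra. Qed.

Lemma num_big s : 4 <= s < 2 ^ n -> INR n * (rt n (1 + s) - 1) * Rpower 2 p <= 2 * (ln s / ln 2).
Proof. intros Hs. pose proof ln2_pos as L. pose proof HnR as Hn.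
 assert (Hn3 : (3 <= n)%nat).
 { destruct (Compare_dec.le_lt_dec 3 n); auto. assert (n = 2%nat) by (unfold n in *; lia). rewrite H in Hs. simpl in Hs. lra. }
 assert (Hn3R : 3 <= INR n) by (replace 3 with (INR 3) by (simpl; lra); apply le_INR; auto).
 assert (Hl1 : 2 * ln 2 <= ln s) by (rewrite <- ln4; apply ln_le; lra).
 assert (Hl2 : ln s <= INR n * ln 2).
 { rewrite <- ln_pow by lra. left. apply ln_increasing; lra. }
 set (y := ln s / ln 2). assert (Hy : ln s = y * ln 2) by (unfold y; field; lra).
 assert (Hy1 : 2 <= y <= INR n) by nra.
 set (l := (y - 2) / (INR n - 2)).
 assert (Hl : 0 <= l <= 1).
 { unfold l. split. apply Rdiv_le_0_compat; lra.
   apply (Rmult_le_reg_r (INR n - 2)). lra. unfold Rdiv. rewrite Rmult_assoc, Rinv_l; lra. }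
 assert (Ers : rt n s = exp ((1 - l) * (2 * ln 2 / INR n) + l * ln 2)).
 { rewrite rt_exp by lra. f_equal. rewrite Hy. unfold l. field. lra. }
 pose proof (exp_conv l (2 * ln 2 / INR n) (ln 2) Hl) as C. rewrite <- Ers, exp_ln in C by lra.
 replace (exp (2 * ln 2 / INR n)) with (rt n 4) in C by (rewrite rt_exp, ln4 by lra; auto).
 assert (R1 : rt n (1 + s) <= rt n (5/4) * rt n s).
 { rewrite <- rt_mult by lra. apply rt_mono. unfold n; lia. lra. lra. }
 assert (R54 : 0 < rt n (5/4)) by apply rt_pos.
 assert (R45 : rt n (5/4) * rt n 4 = rt n 5).
 { rewrite <- rt_mult by lra. f_equal. lra. }
 pose proof E2_bound as E2. pose proof En_bound as En.
 assert (P2 : 0 < Rpower 2 p) by apply exp_pos.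
 assert (K : rt n (1 + s) - 1 <= (1 - l) * (rt n 5 - 1) + l * (2 * rt n (5/4) - 1)).
 { rewrite <- R45. assert (rt n (5/4) * rt n s <= rt n (5/4) * ((1 - l) * rt n 4 + l * 2)) by (apply Rmult_le_compat_l; lra).
   nra. }
 assert (K2 : INR n * Rpower 2 p * (rt n (1 + s) - 1) <=
     (1 - l) * (INR n * Rpower 2 p * (rt n 5 - 1)) + l * INR n * (Rpower 2 p * (2 * rt n (5/4) - 1))).
 { assert (0 <= INR n * Rpower 2 p) by nra.
   pose proof (Rmult_le_compat_l _ _ _ H K). nra. }
 assert (K3 : (1 - l) * (INR n * Rpower 2 p * (rt n 5 - 1)) <= (1 - l) * 4) by (apply Rmult_le_compat_l; lra).
 assert (K4 : l * INR n * (Rpower 2 p * (2 * rt n (5/4) - 1)) <= l * INR n * 2) by (apply Rmult_le_compat_l; nra).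
 assert (E : (1 - l) * 4 + l * INR n * 2 = 2 * (ln s / ln 2)).
 { fold y. unfold l. field. lra. }
 replace (INR n * (rt n (1 + s) - 1) * Rpower 2 p) with (INR n * Rpower 2 p * (rt n (1 + s) - 1)) by ring.
 fold y in E. lra. Qed.
End Num.

Lemma mT_le m a : 0 < a -> INR m * a ^ m <= a * Tg m a.
Proof. intros Ha. destruct m. simpl; lra. pose proof (Tg_last m a ltac:(lra)).
 simpl pow. pose proof (pos_INR (S m)). pose proof (pow_le a m ltac:(lra)).
 replace (INR (S m) * (a * a ^ m)) with (a * (INR (S m) * a ^ m)) by ring.
 apply Rmult_le_compat_l; lra. Qed.

Lemma Rdiv_pow (x y : R) n : y <> 0 -> x ^ n / y ^ n = (x / y) ^ n.
Proof. intros. unfold Rdiv. rewrite Rpow_mult_distr, pow_inv. reflexivity. Qed.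

Section Main.
Variable m : nat.
Hypothesis Hm : (1 <= m)%nat.
Variable x : R.
Hypothesis Hx : 0 < x < 1/2.
Variable g : R.
Hypothesis Hg : 0 < g.
Hypothesis HX : X m (1 + g) = x.

Let n := S m.
Let p := 1 - 1 / INR n.
Let a := 1 + g.
Let S0 := Sg m a.
Let S1 := Sg (S m) a.
Let T := Tg m a.
Let w := T / S0.
Let u := INR m * a ^ m / S0.
Let U := Rpower u p.

Lemma Ha : 1 < a. Proof. unfold a; lra. Qed.
Lemma HS0 : 0 < S0. Proof. apply Sg_pos; auto. pose proof Ha; lra. Qed.
Lemma HS1 : 0 < S1. Proof. apply Sg_pos; [pose proof Ha; lra | lia]. Qed.
Lemma HT : S0 <= T. Proof. apply Tg_ge_Sg. pose proof Ha; lra. Qed.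
Lemma Hw1 : 1 <= w. Proof. unfold w. pose proof HS0; pose proof HT. apply (Rmult_le_reg_r S0); auto.
 unfold Rdiv. rewrite Rmult_assoc, Rinv_l; lra. Qed.
Lemma F1 : g * S1 = a ^ n - 1. Proof. unfold n, S1. rewrite <- (Sg_geo (S m) a). unfold a; ring. Qed.
Lemma F3 : x = w / S1. Proof. rewrite <- HX. unfold X, w, S1, S0, T, a. field. pose proof HS0; pose proof HS1; split; unfold S0, S1, a in *; lra. Qed.
Lemma F4 : u - 1 = g * w.
Proof. unfold u, w. pose proof (Tg_geo m a). replace (a - 1) with g in H by (unfold a; ring).
 pose proof HS0. fold T S0 in H. apply (Rmult_eq_reg_r S0); [|lra].
 replace ((INR m * a ^ m / S0 - 1) * S0) with (INR m * a ^ m - S0) by (field; lra).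
 replace (g * (T / S0) * S0) with (g * T) by (field; lra). lra. Qed.
Lemma Hu1 : 1 < u. Proof. pose proof F4; pose proof Hw1. nra. Qed.
Lemma HU : 0 < U. Proof. apply exp_pos. Qed.

Lemma xGpar_eq : xGpar n g = INR n / S1 * U.
Proof. unfold xGpar, U, n. replace (S m - 1)%nat with m by lia.
 assert (E1 : (1 + g) ^ S m - 1 = g * S1) by (rewrite F1; auto).
 assert (E0 : (1 + g) ^ m - 1 = g * S0) by (unfold S0, a; rewrite (Sg_geo m (1+g)) at 1 || idtac;
   rewrite <- (Sg_geo m (1 + g)); ring).
 rewrite E1, E0. pose proof HS0; pose proof HS1.
 replace ((1 + g) ^ m * g * INR m / (g * S0)) with u by (unfold u, a; field; lra).
 unfold p, n. field. lra. Qed.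

Definition Gv := 1 / x * xGpar n g.

Lemma Gv_eq : Gv = INR n * U / w.
Proof. unfold Gv. rewrite xGpar_eq, F3. pose proof HS1; pose proof Hw1. field. lra. Qed.

Lemma rho_pow : (U * rt n x / w) ^ n = u ^ m / (S1 * w ^ m).
Proof. pose proof Hw1; pose proof HS1; pose proof Hu1.
 unfold Rdiv. rewrite !Rpow_mult_distr, pow_inv. unfold U, p, n.
 rewrite Rpower_p_pow by lra. rewrite rt_pow by (lia || lra).
 rewrite F3. simpl pow. assert (w ^ m <> 0) by (apply pow_nonzero; lra). field. repeat split; lra. Qed.

Lemma rho_pos : 0 < U * rt n x / w.
Proof. pose proof HU; pose proof (rt_pos n x); pose proof Hw1. apply Rdiv_lt_0_compat; nra. Qed.

Lemma R1 : Gv * rt n x <= INR n.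
Proof. assert (U * rt n x / w <= 1).
 { apply (pow_le_inv _ _ n). left; apply rho_pos. lra. unfold n; lia.
   rewrite rho_pow, pow1. pose proof Hw1; pose proof HS1; pose proof Hu1.
   assert (u <= a * w).
   { unfold u, w. pose proof (mT_le m a ltac:(pose proof Ha; lra)). pose proof HS0.
     unfold Rdiv. rewrite <- Rmult_assoc. apply Rmult_le_compat_r. left; apply Rinv_0_lt_compat; lra. unfold T; lra. }
   assert (u ^ m <= (a * w) ^ m) by (apply pow_incr; lra). rewrite Rpow_mult_distr in H3.
   assert (a ^ m <= S1) by (pose proof (Sg_ge0 m a ltac:(pose proof Ha; lra)); unfold S1; rewrite Sg_S; lra).
   pose proof (pow_lt w m ltac:(lra)).
   apply (Rmult_le_reg_r (S1 * w ^ m)). nra. unfold Rdiv. rewrite Rmult_assoc, Rinv_l by nra.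
   assert (a ^ m * w ^ m <= S1 * w ^ m) by (apply Rmult_le_compat_r; lra). lra. }
 rewrite Gv_eq. pose proof (HnR m Hm). fold n in H0.
 replace (INR n * U / w * rt n x) with (INR n * (U * rt n x / w)) by (field; pose proof Hw1; lra).
 pose proof (Rmult_le_compat_l (INR n) _ _ (Rlt_le _ _ H0) H). lra. Qed.

Lemma x_lower : 1 / S1 <= x.
Proof. rewrite F3. pose proof Hw1; pose proof HS1. unfold Rdiv. apply Rmult_le_compat_r. left; apply Rinv_0_lt_compat; lra. lra. Qed.

Lemma R2 : x <= (1/2) ^ n -> INR n / 2 <= Gv * rt n x.
Proof. intros Hx2.
 assert (Ha2 : 2 < a).
 { destruct (Rle_lt_dec a 2); auto. exfalso.
   assert (S1 <= Sg (S m) 2) by (apply Sg_mono; pose proof Ha; lra).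
   pose proof (Sg_geo (S m) 2). replace (2 - 1) with 1 in H0 by ring. rewrite Rmult_1_l in H0.
   pose proof x_lower. pose proof HS1.
   assert (1 / S1 > (1/2) ^ n).
   { rewrite <- Rdiv_pow by lra. rewrite pow1. fold n in H0.
     assert (0 < 2 ^ n) by (apply pow_lt; lra).
     apply Rlt_gt. unfold Rdiv. apply Rmult_lt_compat_l. lra. apply Rinv_lt_contravar. apply Rmult_lt_0_compat; lra. fold n in H. lra. }
   lra. }
 assert (1/2 <= U * rt n x / w).
 { apply (pow_le_inv _ _ n). lra. left; apply rho_pos. unfold n; lia.
   rewrite rho_pow. pose proof Hw1; pose proof HS1; pose proof Hu1.
   assert (A1 : g * S1 <= a ^ n) by (rewrite F1; lra).
   assert (A2 : g * w <= u) by (pose proof F4; lra).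
   assert (A3 : a ^ n <= (2 * g) ^ n) by (apply pow_incr; pose proof Ha; unfold a in *; lra).
   assert (A4 : (g * w) ^ m <= u ^ m) by (apply pow_incr; nra).
   assert (A5 : (g * S1) * (g * w) ^ m <= (2 * g) ^ n * u ^ m).
   { apply Rmult_le_compat; try nra. apply pow_le; nra. }
   rewrite Rpow_mult_distr in A5, A4. rewrite Rpow_mult_distr in A5.
   assert (Gn : g ^ n = g * g ^ m) by reflexivity.
   pose proof (pow_lt g m Hg). pose proof (pow_lt w m ltac:(lra)). pose proof (pow_lt 2 n ltac:(lra)).
   assert (A6 : S1 * w ^ m <= 2 ^ n * u ^ m).
   { apply (Rmult_le_reg_l (g ^ n)). rewrite Gn; nra. rewrite Gn. nra. }
   rewrite <- Rdiv_pow by lra. rewrite pow1.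
   assert (HP : 0 < S1 * w ^ m) by (apply Rmult_lt_0_compat; lra).
   apply (Rmult_le_reg_r (2 ^ n * (S1 * w ^ m))). apply Rmult_lt_0_compat; lra.
   replace (1 / 2 ^ n * (2 ^ n * (S1 * w ^ m))) with (S1 * w ^ m) by (field; lra).
   replace (u ^ m / (S1 * w ^ m) * (2 ^ n * (S1 * w ^ m))) with (2 ^ n * u ^ m) by (field; lra).
   lra. }
 rewrite Gv_eq. pose proof (HnR m Hm). fold n in H0.
 replace (INR n * U / w * rt n x) with (INR n * (U * rt n x / w)) by (field; pose proof Hw1; lra).
 nra. Qed.

Lemma Rlim_lower : g / a <= Gv * rt n x / INR n.
Proof. assert (g / a <= U * rt n x / w).
 { apply (pow_le_inv _ _ n). apply Rdiv_le_0_compat; pose proof Ha; lra. left; apply rho_pos. unfold n; lia.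
   rewrite rho_pow. pose proof Hw1; pose proof HS1; pose proof Hu1.
   assert (A1 : g * S1 <= a ^ n) by (rewrite F1; lra).
   assert (A2 : g * w <= u) by (pose proof F4; lra).
   assert (A4 : (g * w) ^ m <= u ^ m) by (apply pow_incr; nra).
   rewrite Rpow_mult_distr in A4.
   pose proof (pow_lt g m Hg). pose proof (pow_lt w m ltac:(lra)). pose proof (pow_lt a n ltac:(pose proof Ha; lra)).
   assert (Gn : g ^ n = g * g ^ m) by reflexivity.
   rewrite <- Rdiv_pow by (pose proof Ha; lra).
   assert (HP : 0 < S1 * w ^ m) by (apply Rmult_lt_0_compat; lra).
   apply (Rmult_le_reg_r (a ^ n * (S1 * w ^ m))). apply Rmult_lt_0_compat; lra.
   replace (g ^ n / a ^ n * (a ^ n * (S1 * w ^ m))) with (g ^ n * (S1 * w ^ m)) by (field; lra).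
   replace (u ^ m / (S1 * w ^ m) * (a ^ n * (S1 * w ^ m))) with (a ^ n * u ^ m) by (field; lra).
   rewrite Gn.
   assert (g * S1 * (g ^ m * w ^ m) <= a ^ n * u ^ m) by (apply Rmult_le_compat; nra).
   nra. }
 rewrite Gv_eq. pose proof (HnR m Hm). fold n in H0. pose proof Hw1.
 replace (INR n * U / w * rt n x / INR n) with (U * rt n x / w) by (field; lra). auto. Qed.

Lemma x_lower2 : 1 / (INR n * a ^ n) <= x.
Proof. eapply Rle_trans; [|apply x_lower]. pose proof HS1.
 assert (S1 <= INR n * a ^ n) by (apply Sg_le_pow; pose proof Ha; lra).
 apply Rmult_le_compat_l. lra. apply Rinv_le_contravar; lra. Qed.

Lemma R3b : 2 + ln (1 / (2 * x)) <= Gv.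
Proof. pose proof Hu1. pose proof Hw1. pose proof HS1.
 assert (Hs : 2 < 1 / x) by (apply (Rmult_lt_reg_r x); [lra|]; replace (1 / x * x) with 1 by (field; lra); lra).
 assert (Hc : a ^ (S m) = 1 + (u - 1) * (1 / x)).
 { rewrite F4, F3. fold n. pose proof F1. replace (1 + g * w * (1 / (w / S1))) with (1 + g * S1) by (field; lra). lra. }
 pose proof (lower_log m a (u - 1) (1 / x) Hm Ha ltac:(lra) Hs Hc).
 replace (1 / x / 2) with (1 / (2 * x)) in H2 by (field; lra).
 rewrite Gv_eq. replace (1 + (u - 1)) with u in H2 by ring. fold n p U in H2.
 replace (INR n * (a - 1) * U / (u - 1)) with (INR n * U / w) in H2. auto.
 rewrite F4. replace (a - 1) with g by (unfold a; ring). field. split; lra. Qed.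

Lemma Gv_Hm : Gv = 1 / x * Hm_ m x g.
Proof. unfold Gv. f_equal. rewrite xGpar_eq. unfold Hm_, qf. cbv zeta. fold n p.
 replace ((1 + g) ^ n - 1) with (g * S1) by (rewrite F1; auto).
 replace (1 + x * (g * S1)) with u. fold U. pose proof HS1. field. lra.
 rewrite F3. pose proof F4. pose proof HS1. field_simplify; try lra. Qed.

Lemma R3a_small : Gv <= 1 / x.
Proof. destruct (Rle_lt_dec Gv (1/x)); auto. exfalso.
 set (e := (Gv - 1/x) / (2 * INR n)).
 pose proof (HnR m Hm) as Hn. fold n in Hn.
 assert (He : 0 < e) by (unfold e; apply Rdiv_lt_0_compat; lra).
 pose proof (Hm_min m Hm x Hx g e Hg HX He) as HM.
 rewrite <- (Rmult_le_compat_l (1/x) _ _ ltac:(left; apply Rdiv_lt_0_compat; lra) HM) in HM || idtac.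
 assert (Hle : Gv <= 1 / x * Hm_ m x e) by (rewrite Gv_Hm; apply Rmult_le_compat_l; [left; apply Rdiv_lt_0_compat; lra| auto]).
 unfold Hm_, qf in Hle. cbv zeta in Hle. fold n p in Hle.
 set (q := (1 + e) ^ n - 1) in *.
 assert (Hq : INR n * e <= q) by (unfold q; pose proof (Bernoulli_nat e n ltac:(lra)); lra).
 assert (Hqp : 0 < q) by nra.
 assert (Hp : Rpower (1 + x * q) p <= 1 + x * q).
 { replace (1 + x * q) with (Rpower (1 + x * q) 1) at 2 by (apply Rpower_1; nra).
   apply Rle_Rpower. nra. unfold p. assert (0 < 1 / INR n) by (apply Rdiv_lt_0_compat; lra). lra. }
 assert (1 / x * (INR n * e / q * Rpower (1 + x * q) p) <= 1 / x * (INR n * e / q * (1 + x * q))).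
 { apply Rmult_le_compat_l. left; apply Rdiv_lt_0_compat; lra. apply Rmult_le_compat_l; auto.
   apply Rdiv_le_0_compat; nra. }
 assert (1 / x * (INR n * e / q * (1 + x * q)) = INR n * e / q * (1 / x) + INR n * e) by (field; lra).
 assert (INR n * e / q * (1 / x) <= 1 / x).
 { assert (INR n * e / q <= 1) by (apply (Rmult_le_reg_r q); auto; unfold Rdiv; rewrite Rmult_assoc, Rinv_l; lra).
   assert (0 < 1 / x) by (apply Rdiv_lt_0_compat; lra). nra. }
 assert (INR n * e = (Gv - 1 / x) / 2) by (unfold e; field; lra).
 lra. Qed.

Lemma R3a_big : 4 <= 1 / x < 2 ^ n -> Gv <= 2 * (ln (1 / x) / ln 2).
Proof. intros Hs. set (s := 1 / x) in *.
 pose proof (HnR m Hm) as Hn. fold n in Hn.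
 set (c := rt n (1 + s) - 1).
 assert (Hc1 : rt n (1 + s) ^ n = 1 + s) by (apply rt_pow; [unfold n; lia | lra]).
 assert (Hc : 0 < c).
 { unfold c. destruct (Rle_lt_dec (rt n (1 + s)) 1); [|lra]. exfalso.
   assert (rt n (1 + s) ^ n <= 1 ^ n) by (apply pow_incr; pose proof (rt_pos n (1 + s)); lra).
   rewrite pow1, Hc1 in H. lra. }
 pose proof (Hm_min m Hm x Hx g c Hg HX Hc) as HM.
 assert (Hle : Gv <= 1 / x * Hm_ m x c) by (rewrite Gv_Hm; apply Rmult_le_compat_l; [left; apply Rdiv_lt_0_compat; lra| auto]).
 unfold Hm_, qf in Hle. cbv zeta in Hle. fold n p in Hle.
 replace ((1 + c) ^ n - 1) with s in Hle by (unfold c; replace (1 + (rt n (1 + s) - 1)) with (rt n (1 + s)) by ring; lra).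
 replace (1 + x * s) with 2 in Hle by (unfold s; field; lra). fold s in Hle.
 replace (s * (INR n * c / s * Rpower 2 p)) with (INR n * c * Rpower 2 p) in Hle by (field; lra).
 pose proof (num_big m Hm s ltac:(fold n; lra)). fold n p in H. unfold c in Hle. lra. Qed.

Lemma R3a : (1/2) ^ n < x -> Gv <= 2 * (ln (1 / x) / ln 2).
Proof. intros Hx2. assert (Hs : 1 / x < 2 ^ n).
 { rewrite <- Rdiv_pow in Hx2 by lra. rewrite pow1 in Hx2. pose proof (pow_lt 2 n ltac:(lra)).
   apply (Rmult_lt_reg_r x). lra. replace (1 / x * x) with 1 by (field; lra).
   apply (Rmult_lt_reg_l (/ 2 ^ n)). apply Rinv_0_lt_compat; lra.
   replace (/ 2 ^ n * 1) with (1 / 2 ^ n) by (field; lra). replace (/ 2 ^ n * (2 ^ n * x)) with x by (field; lra). lra. }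
 destruct (Rle_lt_dec 4 (1 / x)).
 - apply R3a_big; lra.
 - pose proof R3a_small. pose proof (num_small (1 / x)).
   assert (2 <= 1 / x) by (apply (Rmult_le_reg_r x); [lra|]; replace (1 / x * x) with 1 by (field; lra); lra).
   specialize (H0 ltac:(lra)). lra. Qed.
End Main.

Lemma ballR (c e y : R) : Rabs (y - c) < e -> ball c e y.
Proof. intros H. unfold ball; simpl. unfold AbsRing_ball, abs, minus, plus, opp; simpl. exact H. Qed.

Lemma locR (c : R) (e : posreal) (y : R) : ball c e y -> Rabs (y - c) < e.
Proof. intros H. unfold ball in H; simpl in H. unfold AbsRing_ball, abs, minus, plus, opp in H; simpl in H. exact H. Qed.

Lemma Gform m x : (1 <= m)%nat -> 0 < x < 1/2 ->
  exists g, 0 < g /\ X m (1 + g) = x /\ G (S m) (1 / x) = Gv m x g.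
Proof. intros Hm Hx. unfold G.
 assert (E : Nat.eqb (S m) 1 = false) by (destruct m; [lia|reflexivity]). rewrite E.
 destruct (Req_EM_T (1 / x) 2) as [e|e].
 { exfalso. assert (x * (1/x) = 1) by (field; lra). rewrite e in H. lra. }
 set (P := fun g => 0 < g /\ xpar (S m) g = / (1 / x)).
 assert (Ex : exists g, P g).
 { destruct (X_exists m x Hm Hx) as [g [Hg HX]]. exists g. split; auto.
   rewrite xpar_X by auto. rewrite HX. field. lra. }
 pose proof (epsilon_spec (inhabits 1) P Ex) as [Hg Hxp].
 set (g := epsilon (inhabits 1) P) in *.
 exists g. split; auto. split.
 - rewrite <- xpar_X by auto. rewrite Hxp. field. lra.
 - unfold Gv. reflexivity.
Qed.

Lemma case_n1 :
  (forall x : R, 0 < x <= 1 / 2 ->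
     (x <= (1 / 2) ^ 1 ->
        INR 1 / Rpower x (1 / INR 1) >= G 1 (1 / x) /\
        G 1 (1 / x) >= 1 / 2 * (INR 1 / Rpower x (1 / INR 1))) /\
     (x > (1 / 2) ^ 1 ->
        2 * (ln (1 / x) / ln 2) >= G 1 (1 / x) /\
        G 1 (1 / x) >= 2 + ln (1 / (2 * x)))) /\
  filterlim (fun x => G 1 (1 / x) / (INR 1 / Rpower x (1 / INR 1)))
            (at_right 0) (locally 1).
Proof.
 assert (Gd : forall y, G 1 y = y) by (intros; reflexivity).
 assert (RP : forall x, 0 < x -> Rpower x (1 / INR 1) = x) by (intros; simpl; replace (1/1) with 1 by field; apply Rpower_1; auto).
 split.
 - intros x Hx. rewrite Gd, RP by lra. simpl INR. split.
   + intros _. assert (0 < 1/x) by (apply Rdiv_lt_0_compat; lra).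
     replace (1 / x) with (1/x) by auto. split; unfold Rdiv; lra.
   + intros H. simpl in H. lra.
 - apply filterlim_locally. intros eps. unfold at_right, within, locally.
   exists (mkposreal 1 Rlt_0_1). intros y _ Hy. apply ballR. rewrite Gd, RP by lra. simpl INR.
   replace (1 / y / (1 / y)) with 1 by (field; lra). replace (1 - 1) with 0 by ring. rewrite Rabs_R0. apply cond_pos.
Qed.

Theorem corollary4p2 (n : nat) (Hn : (1 <= n)%nat) :
  (forall x : R, 0 < x <= 1 / 2 ->
     (x <= (1 / 2) ^ n ->
        INR n / Rpower x (1 / INR n) >= G n (1 / x) /\
        G n (1 / x) >= 1 / 2 * (INR n / Rpower x (1 / INR n))) /\
     (x > (1 / 2) ^ n ->
        2 * (ln (1 / x) / ln 2) >= G n (1 / x) /\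
        G n (1 / x) >= 2 + ln (1 / (2 * x)))) /\
  filterlim (fun x => G n (1 / x) / (INR n / Rpower x (1 / INR n)))
            (at_right 0) (locally 1).
Proof.
 destruct n as [|m]; [lia|]. destruct m as [|m']. exact case_n1.
 set (m := S m') in *. assert (Hm : (1 <= m)%nat) by (unfold m; lia).
 assert (HnR : 0 < INR (S m)) by (apply lt_0_INR; lia).
 change (Rpower ?x (1 / INR (S m))) with (rt (S m) x).
 split.
 - intros x Hx. destruct (Req_dec x (1/2)) as [Ex|Ex].
   + subst x. assert (G2 : G (S m) (1 / (1/2)) = 2).
     { unfold G. assert (E : Nat.eqb (S m) 1 = false) by (unfold m; reflexivity). rewrite E.
       destruct (Req_EM_T (1 / (1/2)) 2) as [e|e]; auto. exfalso; apply e; field. }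
     rewrite G2. split.
     * intros H. exfalso. assert ((1/2) ^ m' <= 1 ^ m') by (apply pow_incr; lra). rewrite pow1 in H0.
       pose proof (pow_le (1/2) m' ltac:(lra)). unfold m in H. simpl in H. lra.
     * intros _. replace (1 / (1/2)) with 2 by field. replace (1 / (2 * (1/2))) with 1 by field.
       rewrite ln_1. pose proof ln2_pos. split. replace (2 * (ln 2 / ln 2)) with 2 by (field; lra). lra. lra.
   + assert (Hx' : 0 < x < 1/2) by lra.
     destruct (Gform m x Hm Hx') as [g [Hg [HX HG]]]. rewrite HG.
     pose proof (rt_pos (S m) x) as Hrt.
     split.
     * intros H. pose proof (R1 m Hm x Hx' g Hg HX). pose proof (R2 m Hm x Hx' g Hg HX H).
       split.
       -- apply Rle_ge. apply (Rmult_le_reg_r (rt (S m) x)); auto. unfold Rdiv. rewrite Rmult_assoc, Rinv_l; lra.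
       -- apply Rle_ge. apply (Rmult_le_reg_r (rt (S m) x)); auto.
          replace (1 / 2 * (INR (S m) / rt (S m) x) * rt (S m) x) with (INR (S m) / 2) by (field; lra). auto.
     * intros H. split.
       -- apply Rle_ge. apply (R3a m Hm x Hx' g Hg HX). lra.
       -- apply Rle_ge. apply (R3b m Hm x Hx' g Hg HX).
 - apply filterlim_locally. intros eps.
   set (A := 1 / eps + 1).
   assert (HA : 1 < A) by (unfold A; assert (0 < 1 / eps) by (apply Rdiv_lt_0_compat; [lra| apply cond_pos]); lra).
   assert (HAp : 0 < INR (S m) * A ^ (S m)) by (apply Rmult_lt_0_compat; [lra | apply pow_lt; lra]).
   set (d := Rmin (1/4) (1 / (INR (S m) * A ^ (S m)))).
   assert (Hd : 0 < d) by (unfold d; apply Rmin_pos; [lra | apply Rdiv_lt_0_compat; lra]).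
   unfold at_right, within, locally. exists (mkposreal d Hd). intros y Hy Hy0.
   pose proof (locR 0 (mkposreal d Hd) y Hy) as Hy1. simpl in Hy1. rewrite Rminus_0_r, Rabs_pos_eq in Hy1 by lra.
   assert (Hy2 : y < 1/4) by (pose proof (Rmin_l (1/4) (1 / (INR (S m) * A ^ (S m)))); fold d in H; lra).
   assert (Hy3 : y < 1 / (INR (S m) * A ^ (S m))) by (pose proof (Rmin_r (1/4) (1 / (INR (S m) * A ^ (S m)))); fold d in H; lra).
   assert (Hx' : 0 < y < 1/2) by lra.
   destruct (Gform m y Hm Hx') as [g [Hg [HX HG]]]. rewrite HG.
   pose proof (R1 m Hm y Hx' g Hg HX) as U1. pose proof (Rlim_lower m Hm y Hx' g Hg HX) as L1.
   pose proof (x_lower2 m Hm y g Hg HX) as XL.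
   pose proof (rt_pos (S m) y) as Hrt.
   assert (Hga : A < 1 + g).
   { destruct (Rlt_le_dec A (1 + g)); auto. exfalso.
     assert ((1 + g) ^ (S m) <= A ^ (S m)) by (apply pow_incr; lra).
     assert (INR (S m) * (1 + g) ^ S m <= INR (S m) * A ^ S m) by (apply Rmult_le_compat_l; lra).
     assert (0 < INR (S m) * (1 + g) ^ S m) by (apply Rmult_lt_0_compat; [lra| apply pow_lt; lra]).
     assert (1 / (INR (S m) * A ^ S m) <= 1 / (INR (S m) * (1 + g) ^ S m)).
     { unfold Rdiv. rewrite !Rmult_1_l. apply Rinv_le_contravar; lra. }
     lra. }
   apply ballR.
   replace (Gv m y g / (INR (S m) / rt (S m) y)) with (Gv m y g * rt (S m) y / INR (S m)) by (field; lra).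
   assert (Up : Gv m y g * rt (S m) y / INR (S m) <= 1).
   { apply (Rmult_le_reg_r (INR (S m))); auto. unfold Rdiv. rewrite Rmult_assoc, Rinv_l; lra. }
   assert (Lo : 1 - eps < g / (1 + g)).
   { replace (g / (1 + g)) with (1 - 1 / (1 + g)) by (field; lra).
     assert (1 / (1 + g) < eps).
     { apply (Rmult_lt_reg_r (1 + g)). lra. replace (1 / (1 + g) * (1 + g)) with 1 by (field; lra).
       pose proof (cond_pos eps). unfold A in Hga.
       assert (1 / eps * eps = 1) by (field; lra).
       assert (eps * (1 / eps + 1) < eps * (1 + g)) by (apply Rmult_lt_compat_l; lra). nra. }
     lra. }
   rewrite Rabs_left1 by lra. lra.
Qed.
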